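(* Let $L$ be a finite commutative C-loop. Then $L$ is (isomorphic to, via $(u,v)\mapsto uv$) the direct product $U\times V$, where $U=\{x\in L: |x|\text{ is a power of }2\}$ and $V=\{x\in L: |x|\text{ is odd}\}$; here $V$ is a commutative group and $U$ is a commutative C-loop in which every element has order a power of $2$. Consequently every finite commutative C-loop is a direct product of a finite commutative group and a finite commutative $2$-C-loop.
   Context: A C-loop is a loop satisfying $x(y(yz))=((xy)y)z$ for all $x,y,z$; C-loops are power associative and $|x|$ denotes the order of $x$, the least $n>0$ with $x^n=e$. A $2$-loop is a finite power associative loop of exponent $2^s$ for some $s$ (every element has order a power of $2$). *)

(* Defs.v *)
From mathcomp Require Import all_boot.
Set Implicit Arguments. Unset Strict Implicit. Unset Printing Implicit Defensive.

Definition is_loop (T : Type) (mul : T -> T -> T) (e : T) : Prop :=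
  (forall x, mul e x = x /\ mul x e = x) /\
  (forall a, bijective (mul a)) /\
  (forall a, bijective (fun x => mul x a)).

Definition commutative_op (T : Type) (mul : T -> T -> T) : Prop :=
  forall x y, mul x y = mul y x.

Definition C_law (T : Type) (mul : T -> T -> T) : Prop :=
  forall x y z, mul x (mul y (mul y z)) = mul (mul (mul x y) y) z.

(* x^n (well defined in power-associative loops: x^0 = e, x^(n+1) = x x^n). *)
Definition lpow (T : Type) (mul : T -> T -> T) (e : T) (x : T) (n : nat) : T :=
  iter n (mul x) e.

Definition has_order (T : Type) (mul : T -> T -> T) (e : T) (x : T) (n : nat) : Prop :=
  0 < n /\ lpow mul e x n = e /\ (forall m, 0 < m -> m < n -> lpow mul e x m <> e).

Definition two_part (T : Type) (mul : T -> T -> T) (e : T) (x : T) : Prop :=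
  exists k, has_order mul e x (2 ^ k).

Definition odd_part (T : Type) (mul : T -> T -> T) (e : T) (x : T) : Prop :=
  exists n, odd n /\ has_order mul e x n.

(* Main.v *)
Require Import Defs.
From mathcomp Require Import all_boot zify.
Set Implicit Arguments. Unset Strict Implicit. Unset Printing Implicit Defensive.

Section CLoop.
Variable T : finType.
Variable mul : T -> T -> T.
Variable e : T.
Hypothesis HL : is_loop mul e.
Hypothesis Hcm : commutative_op mul.
Hypothesis HC : C_law mul.

Local Notation "x ** y" := (mul x y) (at level 40, left associativity).
Local Notation pw := (lpow mul e).

Lemma idl x : e ** x = x. Proof. by case: HL => H _; case: (H x). Qed.
Lemma idr x : x ** e = x. Proof. by case: HL => H _; case: (H x). Qed.
Lemma lcan a x y : a ** x = a ** y -> x = y.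
Proof. case: HL => _ [H _] E; exact: (bij_inj (H a) E). Qed.
Lemma rcan a x y : x ** a = y ** a -> x = y.
Proof. by rewrite (Hcm x) (Hcm y); apply: lcan. Qed.
Lemma rsurj a t : exists u, u ** a = t.
Proof. case: HL => _ [_ H]; case: (H a) => g _ K; by exists (g t); rewrite (K t). Qed.
Lemma lsurj a t : exists u, a ** u = t.
Proof. case: (rsurj a t) => u <-; exists u; exact: Hcm. Qed.

Lemma LAP y z : y ** (y ** z) = (y ** y) ** z.
Proof. by have := HC e y z; rewrite !idl. Qed.
Lemma RAP x y : (x ** y) ** y = x ** (y ** y).
Proof. by have := HC x y e; rewrite !idr. Qed.
Lemma MID x y z : x ** ((y ** y) ** z) = (x ** (y ** y)) ** z.
Proof. by have := HC x y z; rewrite LAP RAP. Qed.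

Definition inv x := odflt e [pick y | x ** y == e].
Lemma mulV x : x ** inv x = e.
Proof.
rewrite /inv; case: pickP => [y /eqP //|H].
by case: (lsurj x e) => u Hu; move: (H u); rewrite Hu eqxx.
Qed.
Lemma mulVl x : inv x ** x = e. Proof. by rewrite Hcm mulV. Qed.
Lemma RIP t y : (t ** y) ** inv y = t.
Proof.
case: (rsurj y t) => u <-.
have := MID u y (inv y); rewrite -LAP mulV idr => H.
by rewrite RAP -H.
Qed.
Lemma LIP y t : inv y ** (y ** t) = t.
Proof. by rewrite Hcm (Hcm y) RIP. Qed.
Lemma invK x : inv (inv x) = x.
Proof. by apply: (@lcan (inv x)); rewrite mulV mulVl. Qed.
Lemma LIP' y t : y ** (inv y ** t) = t.
Proof. by rewrite -{1}(invK y) LIP. Qed.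
Lemma inve : inv e = e. Proof. by rewrite -(idl (inv e)) mulV. Qed.
Lemma invM x y : inv (x ** y) = inv x ** inv y.
Proof.
have H1 : inv (x ** y) ** x = inv y.
  by rewrite -{2}(RIP x y) LIP.
by rewrite -(RIP (inv (x ** y)) x) H1 Hcm.
Qed.

Definition nuc a := forall x y, (a ** x) ** y = a ** (x ** y).
Lemma nuc_mid a : nuc a -> forall x y, x ** (a ** y) = (x ** a) ** y.
Proof. by move=> Ha x y; rewrite (Hcm x a) Ha (Hcm x y) -Ha Hcm. Qed.
Lemma nuc_right a : nuc a -> forall x y, (x ** y) ** a = x ** (y ** a).
Proof. by move=> Ha x y; rewrite Hcm -Ha (Hcm a x) -nuc_mid // (Hcm a y). Qed.

Lemma nuc_invI a : nuc (inv a) -> nuc a.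
Proof.
move=> Ha z y.
have := Ha (a ** z) y; rewrite LIP => ->.
by rewrite LIP'.
Qed.
Lemma mid_nuc a : (forall x z, x ** (a ** z) = (x ** a) ** z) -> nuc a.
Proof.
move=> M; apply: nuc_invI => p v.
set w := inv a ** (p ** v).
have Hw : a ** w = p ** v by rewrite /w LIP'.
have Hv : v = (inv p ** a) ** w by rewrite -M Hw LIP.
have Hp : inv a ** p = inv (inv p ** a) by rewrite invM invK Hcm.
by rewrite Hp {1}Hv LIP.
Qed.
Lemma sq_nuc y : nuc (y ** y).
Proof. apply: mid_nuc => x z; exact: MID. Qed.
Lemma nuc_e : nuc e. Proof. by move=> x y; rewrite !idl. Qed.
Lemma nucM a b : nuc a -> nuc b -> nuc (a ** b).
Proof. by move=> Ha Hb x y; rewrite Ha Ha Hb -Ha. Qed.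
Lemma nucV a : nuc a -> nuc (inv a).
Proof. by move=> Ha; apply: nuc_invI; rewrite invK. Qed.

Lemma sqM x y : (x ** y) ** (x ** y) = (x ** x) ** (y ** y).
Proof.
have H : ((x ** x) ** (y ** y)) ** inv (x ** y) = x ** y.
  rewrite invM (sq_nuc x) (Hcm (inv x)) -(sq_nuc y) -(LAP y) mulV idr.
  by rewrite (Hcm y) -(sq_nuc x) -(LAP x) mulV idr.
by have := RIP ((x ** x) ** (y ** y)) (inv (x ** y)); rewrite H invK.
Qed.

Lemma pw0 x : pw x 0 = e. Proof. by []. Qed.
Lemma pwS x n : pw x n.+1 = x ** pw x n. Proof. by []. Qed.
Lemma pw1 x : pw x 1 = x. Proof. by rewrite pwS pw0 idr. Qed.
Lemma pwSS x n : pw x n.+2 = (x ** x) ** pw x n. Proof. by rewrite !pwS LAP. Qed.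
Lemma pwD x m n : pw x (m + n) = pw x m ** pw x n.
Proof.
elim: m {-2}m (leqnn m) => [|k IH] [|[|m]] Hm; rewrite ?add0n ?pw0 ?idl //.
- by rewrite pw1 add1n.
- rewrite !addSn pwSS IH; last by move: Hm; rewrite ltnS; apply: ltnW.
  by rewrite pwSS (sq_nuc x).
Qed.
Lemma pw_e n : pw e n = e. Proof. by elim: n => // n IH; rewrite pwS IH idl. Qed.
Lemma pwM x m n : pw x (m * n) = pw (pw x m) n.
Proof. by elim: n => [|n IH]; rewrite ?muln0 // mulnS pwD IH. Qed.
Lemma pw2 x : pw x 2 = x ** x. Proof. by rewrite pwS pw1. Qed.
Lemma nuc_pw a n : nuc a -> nuc (pw a n).
Proof. by move=> Ha; elim: n => [|n IH]; [exact: nuc_e | exact: nucM]. Qed.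
Lemma pwMn a b n : nuc b -> pw (a ** b) n = pw a n ** pw b n.
Proof.
move=> Hb; elim: n => [|n IH]; first by rewrite !pw0 idl.
rewrite !pwS IH (Hcm a b) Hb -(nuc_right (nuc_pw n Hb)).
by rewrite -Hb (Hcm b (a ** pw a n)) -(nuc_mid Hb).
Qed.
Lemma pw_inv x n : pw (inv x) n = inv (pw x n).
Proof. by elim: n => [|n IH]; rewrite ?inve // !pwS IH invM. Qed.
Lemma pw_e_mul x n c : pw x n = e -> pw x (n * c) = e.
Proof. by move=> H; rewrite pwM H pw_e. Qed.

Lemma ex_pos x : exists n, 0 < n /\ pw x n = e.
Proof.
pose f := fun i : 'I_#|T|.+1 => pw x i.
have key : forall i j : nat, i < j -> pw x i = pw x j -> exists n, 0 < n /\ pw x n = e.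
  move=> i j lij E; exists (j - i); split; first by rewrite subn_gt0.
  apply: (@rcan (pw x i)).
  have Hji : j - i + i = j by rewrite subnK // ltnW.
  by rewrite -(pwD x (j - i) i) Hji idl E.
have /injectivePn [i [j Hij Hf]] : ~~ injectiveb f.
  apply/negP => /injectiveP inj; have := leq_card f inj; by rewrite card_ord ltnn.
rewrite /f in Hf; move: Hij; rewrite neq_ltn => /orP [lij|lji].
- exact: key lij Hf.
- exact: key lji (esym Hf).
Qed.

Lemma hord_dvd x n : has_order mul e x n -> forall m, pw x m = e <-> n %| m.
Proof.
case=> n0 [pn mn] m.
have E : pw x m = pw x (m %% n) by rewrite {1}(divn_eq m n) pwD mulnC pw_e_mul // idl.
rewrite E /dvdn; split; last by move/eqP ->.
move=> H; apply/eqP; case: (posnP (m %% n)) => // hp.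
by have := mn _ hp (ltn_pmod m n0).
Qed.

Lemma ex_ord x : exists n, has_order mul e x n.
Proof.
have ex : exists n, (0 < n) && (pw x n == e).
  by case: (ex_pos x) => n [h1 h2]; exists n; rewrite h1 h2 eqxx.
case: (ex_minnP ex) => n /andP [n0 /eqP pn] mn.
exists n; split => //; split => // m m0 mlt pm.
have := mn m; rewrite m0 pm eqxx /= => /(_ isT).
by rewrite leqNgt mlt.
Qed.

Lemma pw_dvd x n m : pw x n = e -> n %| m -> pw x m = e.
Proof. by move=> H /divnK <-; rewrite mulnC pw_e_mul. Qed.

Lemma U_char x : two_part mul e x <-> exists k, pw x (2 ^ k) = e.
Proof.
split; first by case=> k [_ [h _]]; exists k.
case=> k hk; case: (ex_ord x) => n hn.
have : n %| 2 ^ k by apply/(hord_dvd hn).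
case/(dvdn_pfactor n k (isT : prime 2)) => j _ E.
by exists j; rewrite -E.
Qed.

Lemma V_char x : odd_part mul e x <-> exists m, odd m /\ pw x m = e.
Proof.
split; first by case=> m [om [_ [h _]]]; exists m.
case=> m [om hm]; case: (ex_ord x) => n hn.
have d : n %| m by apply/(hord_dvd hn).
exists n; split => //.
by move: om; rewrite -(divnK d) oddM => /andP [].
Qed.

Lemma U_e : two_part mul e e.
Proof. by apply/U_char; exists 0; rewrite pw1. Qed.
Lemma V_e : odd_part mul e e.
Proof. by apply/V_char; exists 1; rewrite pw1. Qed.

Lemma U_mul x y : two_part mul e x -> two_part mul e y -> two_part mul e (x ** y).
Proof.
move=> /U_char [a ha] /U_char [b hb]; apply/U_char; exists (a + b).+1.
rewrite expnS pwM pw2 sqM pwMn; last exact: sq_nuc.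
rewrite -(pw2 x) -(pw2 y) -!pwM.
rewrite (pw_dvd ha) ?(pw_dvd hb) ?idl //; rewrite -expnS dvdn_exp2l //; lia.
Qed.

Lemma odd_nuc x : odd_part mul e x -> nuc x.
Proof.
move=> /V_char [m [om hm]].
have E : m.+1 = 2 * (m.+1)./2.
  by rewrite mul2n -[in LHS](odd_double_half m.+1) /= om.
have -> : x = pw x m.+1 by rewrite pwS hm idr.
rewrite E pwM pw2; exact: nuc_pw (sq_nuc x).
Qed.

Lemma V_mul x y : odd_part mul e x -> odd_part mul e y -> odd_part mul e (x ** y).
Proof.
move=> hx hy; have ny := odd_nuc hy.
move: hx hy => /V_char [m [om hm]] /V_char [n [on hn]].
apply/V_char; exists (m * n); split; first by rewrite oddM om on.
by rewrite pwMn // pw_e_mul // mulnC pw_e_mul // idl.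
Qed.

Lemma V_inv x : odd_part mul e x -> odd_part mul e (inv x).
Proof.
move=> /V_char [m [om hm]]; apply/V_char; exists m; split => //.
by rewrite pw_inv hm inve.
Qed.

Lemma split2 n : 0 < n -> exists k m, odd m /\ n = 2 ^ k * m.
Proof.
elim/ltn_ind: n => n IH n0.
case Ho: (odd n); first by exists 0, n; rewrite expn0 mul1n.
have E : n = n./2 * 2 by rewrite muln2 -[in LHS](odd_double_half n) Ho.
move: E; set h := n./2 => E.
have [k [m [om hm]]] : exists k m, odd m /\ h = 2 ^ k * m by apply: IH; lia.
exists k.+1, m; split => //.
by rewrite E hm expnS mulnC mulnA.
Qed.


Lemma pw_modn x n a : has_order mul e x n -> pw x a = pw x (a %% n).
Proof.
case=> n0 [pn _].
by rewrite {1}(divn_eq a n) (pwD x (a %/ n * n) (a %% n)) mulnC (pw_e_mul _ pn) idl.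
Qed.

Lemma decomp x : exists u v, [/\ two_part mul e u, odd_part mul e v & x = u ** v].
Proof.
case: (ex_ord x) => n hn.
have n0 : 0 < n by case: hn.
case: (split2 n0) => k [m [om En]].
have cop : coprime (2 ^ k) m by apply: coprimeXl; rewrite coprime2n.
have hc1 := chinese_modl cop 1 0.
have hc2 := chinese_modr cop 1 0.
have hd1 := chinese_modl cop 0 1.
have hd2 := chinese_modr cop 0 1.
move: hc1 hc2 hd1 hd2.
set c := chinese (2 ^ k) m 1 0; set d := chinese (2 ^ k) m 0 1 => hc1 hc2 hd1 hd2.
exists (pw x c), (pw x d); split.
- apply/U_char; exists k; rewrite -pwM; apply/(hord_dvd hn).
  by rewrite En (mulnC c) dvdn_mul // /dvdn hc2 mod0n.
- apply/V_char; exists m; split => //; rewrite -pwM; apply/(hord_dvd hn).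
  by rewrite En dvdn_mul // /dvdn hd1 mod0n.
- have Hm : (c + d) %% n = 1 %% n.
    apply/eqP; rewrite En chinese_remainder //; apply/andP; split.
    + by rewrite -modnDm hc1 hd1 modnDm addn0.
    + by rewrite -modnDm hc2 hd2 modnDm add0n.
  rewrite -(pwD x c d) (pw_modn _ hn) Hm -(pw_modn _ hn).
  by rewrite pw1.
Qed.

Lemma uniq_dec u1 v1 u2 v2 : two_part mul e u1 -> odd_part mul e v1 ->
  two_part mul e u2 -> odd_part mul e v2 -> u1 ** v1 = u2 ** v2 -> u1 = u2 /\ v1 = v2.
Proof.
move=> hu1 hv1 hu2 hv2 E.
pose w := v2 ** inv v1.
have Vw : odd_part mul e w by apply: V_mul => //; apply: V_inv.
have nw := odd_nuc Vw.
have Hw : u2 ** w = u1.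
  by rewrite /w -(nuc_right (nucV (odd_nuc hv1))) -E RIP.
have we : w = e.
  move: hu1 hu2 => /U_char [a ha] /U_char [b hb].
  have K : pw w (2 ^ (a + b)) = e.
    have e1 : pw u1 (2 ^ (a + b)) = e.
      by apply: (pw_dvd ha); rewrite dvdn_exp2l // leq_addr.
    have e2 : pw u2 (2 ^ (a + b)) = e.
      by apply: (pw_dvd hb); rewrite dvdn_exp2l // leq_addl.
    have := pwMn u2 (2 ^ (a + b)) nw; rewrite Hw e1 e2 idl.
    by move=> <-.
  case: (ex_ord w) => o ho.
  move: Vw => /V_char [m [om hm]].
  have d1 : o %| 2 ^ (a + b) by apply/(hord_dvd ho).
  have d2 : o %| m by apply/(hord_dvd ho).
  have : o %| gcdn (2 ^ (a + b)) m by rewrite dvdn_gcd d1 d2.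
  have cop : coprime (2 ^ (a + b)) m by apply: coprimeXl; rewrite coprime2n.
  move: cop; rewrite /coprime => /eqP ->; rewrite dvdn1 => /eqP o1.
  rewrite o1 in ho; case: ho => _ [h1 _].
  by rewrite -(pw1 w).
have u12 : u1 = u2 by rewrite -Hw we idr.
split => //; apply: (@lcan u2); by rewrite -{1}u12 E.
Qed.

Lemma hom_dec u1 v1 u2 v2 : odd_part mul e v1 -> odd_part mul e v2 ->
  (u1 ** v1) ** (u2 ** v2) = (u1 ** u2) ** (v1 ** v2).
Proof.
move=> /odd_nuc n1 /odd_nuc n2.
rewrite -(nuc_mid n1) -n1 (Hcm v1 u2) -(nuc_mid n1).
by rewrite (nuc_right (nucM n1 n2)).
Qed.

Lemma main :
  let U := two_part mul e in
  let V := odd_part mul e in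
  (U e /\ forall x y, U x -> U y -> U (mul x y)) /\
  (V e /\ forall x y, V x -> V y -> V (mul x y)) /\
  (forall x y z, V x -> V y -> V z -> mul x (mul y z) = mul (mul x y) z) /\
  (forall x, exists u v, [/\ U u, V v & x = mul u v]) /\
  (forall u1 v1 u2 v2, U u1 -> V v1 -> U u2 -> V v2 ->
     mul u1 v1 = mul u2 v2 -> u1 = u2 /\ v1 = v2) /\
  (forall u1 v1 u2 v2, U u1 -> V v1 -> U u2 -> V v2 ->
     mul (mul u1 v1) (mul u2 v2) = mul (mul u1 u2) (mul v1 v2)).
Proof.
cbv zeta.
split; first by split; [exact: U_e | exact: U_mul].
split; first by split; [exact: V_e | exact: V_mul].
split; first by move=> x y z _ hy _; rewrite (nuc_mid (odd_nuc hy)).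
split; first exact: decomp.
split; first exact: uniq_dec.
move=> u1 v1 u2 v2 _ h1 _ h2; exact: hom_dec.
Qed.

End CLoop.

Theorem theorem7p3 (T : finType) (mul : T -> T -> T) (e : T) :
  is_loop mul e -> commutative_op mul -> C_law mul ->
  let U := two_part mul e in
  let V := odd_part mul e in
  (* U and V are subloops *)
  (U e /\ forall x y, U x -> U y -> U (mul x y)) /\
  (V e /\ forall x y, V x -> V y -> V (mul x y)) /\
  (* V is a (commutative) group: multiplication is associative on V *)
  (forall x y z, V x -> V y -> V z -> mul x (mul y z) = mul (mul x y) z) /\
  (* (u,v) |-> uv is a bijection U x V -> L ... *)
  (forall x, exists u v, [/\ U u, V v & x = mul u v]) /\
  (forall u1 v1 u2 v2, U u1 -> V v1 -> U u2 -> V v2 ->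
     mul u1 v1 = mul u2 v2 -> u1 = u2 /\ v1 = v2) /\
  (* ... and a homomorphism from the direct product U x V *)
  (forall u1 v1 u2 v2, U u1 -> V v1 -> U u2 -> V v2 ->
     mul (mul u1 v1) (mul u2 v2) = mul (mul u1 u2) (mul v1 v2)).
Proof. move=> HL Hcm HC; exact: (main HL Hcm HC). Qed.
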